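(* Let $n\ge 2$ and let $l$ be the correspondence defined on $\mathcal S_{\neq}$ by $l(S)=so(n)\setminus\mathcal L_{\mathrm{invar}}(o_1,\dots,o_n)$, where $o_1,\dots,o_n$ is an orthonormal basis of eigenvectors of $S$ (this is independent of the choice of such basis). Then $$\mathrm{Graph}(l)=\{(S,L):S\in\mathcal S_{\neq},\ L\in l(S)\}$$ is open and dense in $\mathcal S(n,\mathbb R)\times so(n)$ (product topology, each factor with the relative norm topology).
   Context: $\mathcal S(n,\mathbb R)$ denotes the real symmetric $n\times n$ matrices and $\mathcal S_{\neq}\subseteq\mathcal S(n,\mathbb R)$ those whose $n$ eigenvalues are pairwise distinct. $so(n)$ denotes the real skew-symmetric $n\times n$ matrices. For an orthonormal basis $o_1,\dots,o_n$ of $\mathbb R^n$, $\mathcal L_{\mathrm{invar}}(o_1,\dots,o_n)$ is the set of $L\in so(n)$ for which there exists a subset $\{o_{j_1},\dots,o_{j_k}\}$ with $1\le k<n$ such that $\mathrm{span}_{\mathbb R}\{o_{j_1},\dots,o_{j_k}\}$ is an invariant subspace of $L$. *)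

(* Defs.v *)
From Stdlib Require Import Reals.
From mathcomp Require Import all_boot.
Set Implicit Arguments. Unset Strict Implicit. Unset Printing Implicit Defensive.

Local Open Scope R_scope.

Definition vec (n : nat) := 'I_n -> R.
Definition mat (n : nat) := 'I_n -> 'I_n -> R.

Definition mulv n (A : mat n) (v : vec n) : vec n :=
  fun i => \big[Rplus/0]_(j < n) (A i j * v j).
Definition dot n (u v : vec n) : R := \big[Rplus/0]_(i < n) (u i * v i).

Definition symmetric n (A : mat n) : Prop := forall i j, A i j = A j i.
Definition skew n (A : mat n) : Prop := forall i j, A i j = - A j i.

Definition is_eigvec n (A : mat n) (v : vec n) (lam : R) : Prop :=
  (exists i, v i <> 0) /\ forall i, mulv A v i = lam * v i.

Definition distinct_eigs n (A : mat n) : Prop :=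
  exists lam : 'I_n -> R, injective lam /\ forall i, exists v, is_eigvec A v (lam i).

Definition orthonormal_basis n (o : 'I_n -> vec n) : Prop :=
  forall i j, dot (o i) (o j) = if i == j then 1 else 0.

Definition eigenbasis n (A : mat n) (o : 'I_n -> vec n) : Prop :=
  orthonormal_basis o /\ forall i, exists lam, is_eigvec A (o i) lam.

Definition in_span n (J : {set 'I_n}) (o : 'I_n -> vec n) (v : vec n) : Prop :=
  exists c : 'I_n -> R, forall i, v i = \big[Rplus/0]_(j in J) (c j * o j i).

Definition invariant n (L : mat n) (V : vec n -> Prop) : Prop :=
  forall v, V v -> V (mulv L v).

Definition L_invar n (o : 'I_n -> vec n) (L : mat n) : Prop :=
  skew L /\
  exists J : {set 'I_n}, (0 < #|J|)%N /\ (#|J| < n)%N /\ invariant L (in_span J o).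

Definition graph_l n (S L : mat n) : Prop :=
  symmetric S /\ distinct_eigs S /\ skew L /\
  exists o, eigenbasis S o /\ ~ L_invar o L.

(* max-entry distance < eps (a norm; all norms on the finite-dim space are
   equivalent, so this gives the norm topology) *)
Definition near n (eps : R) (A B : mat n) : Prop :=
  forall i j, Rabs (A i j - B i j) < eps.

Definition open_in_Sso n (G : mat n -> mat n -> Prop) : Prop :=
  forall S L, G S L -> symmetric S /\ skew L /\
    exists eps, 0 < eps /\ forall S' L', symmetric S' -> skew L' ->
      near eps S S' -> near eps L L' -> G S' L'.

Definition dense_in_Sso n (G : mat n -> mat n -> Prop) : Prop :=
  forall S L eps, symmetric S -> skew L -> 0 < eps ->
    exists S' L', G S' L' /\ near eps S S' /\ near eps L L'.

(* Main.v *)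
Require Import Defs.
From HB Require Import structures.
From Stdlib Require Import Reals Lra Lia Psatz Classical ClassicalEpsilon FunctionalExtensionality.
From mathcomp Require Import all_boot all_algebra.
Require Import Defs.
Set Implicit Arguments. Unset Strict Implicit. Unset Printing Implicit Defensive.
Delimit Scope ring_scope with ring.
Local Open Scope R_scope.

Definition Reqb (x y : R) : bool := if Req_EM_T x y then true else false.
Lemma Reqb_axiom : Equality.axiom Reqb.
Proof. move=> x y; rewrite /Reqb; case: Req_EM_T => h; [by left|by right]. Qed.
HB.instance Definition _ := hasDecEq.Build R Reqb_axiom.

Definition Rfind (P : pred R) (k : nat) : option R :=
  match excluded_middle_informative (exists x, P x) with
  | left h => Some (proj1_sig (constructive_indefinite_description _ h))
  | right _ => None end.
Lemma Rfind_c P k x : Rfind P k = Some x -> P x.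
Proof. rewrite /Rfind; case: excluded_middle_informative => // h [<-].
by case: constructive_indefinite_description. Qed.
Lemma Rfind_cp (P : pred R) : (exists x, P x) -> exists k, Rfind P k.
Proof. move=> h; exists 0%N; rewrite /Rfind; case: excluded_middle_informative => //. Qed.
Lemma Rfind_e (P Q : pred R) : P =1 Q -> Rfind P =1 Rfind Q.
Proof. move=> h; have -> : P = Q by apply: functional_extensionality. by []. Qed.
HB.instance Definition _ := hasChoice.Build R Rfind_c Rfind_cp Rfind_e.

Lemma RaddA : associative Rplus. Proof. move=> x y z; lra. Qed.
Lemma RmulA : associative Rmult. Proof. move=> x y z; ring. Qed.
Lemma Radd0 : left_id 0 Rplus. Proof. move=> x; lra. Qed.
Lemma RaddN : left_inverse 0 Ropp Rplus. Proof. move=> x; lra. Qed.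
HB.instance Definition _ := GRing.isZmodule.Build R RaddA Rplus_comm Radd0 RaddN.
Lemma Rmul1 : left_id 1 Rmult. Proof. move=> x; lra. Qed.
Lemma RmulDl : left_distributive Rmult Rplus. Proof. move=> x y z; lra. Qed.
Lemma R1n0 : (1 : R) != 0. Proof. apply/eqP; lra. Qed.
HB.instance Definition _ := GRing.Zmodule_isComNzRing.Build R RmulA Rmult_comm Rmul1 RmulDl R1n0.
Lemma RmulVf (x : R) : x != 0 -> (/ x * x = 1).
Proof. by move/eqP=> h; rewrite Rinv_l. Qed.
Lemma Rinv0' : (/ 0 = 0). Proof. exact: Rinv_0. Qed.
HB.instance Definition _ := GRing.ComNzRing_isField.Build R RmulVf Rinv0'.


Lemma RmulC' : commutative Rmult. Proof. move=> x y; ring. Qed.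
Lemma RaddC' : commutative Rplus. Proof. move=> x y; ring. Qed.
HB.instance Definition _ := Monoid.isComLaw.Build R 0 Rplus RaddA RaddC' Radd0.
Lemma Rmul1' : left_id 1 Rmult. Proof. move=> x; ring. Qed.
HB.instance Definition _ := Monoid.isComLaw.Build R 1 Rmult RmulA RmulC' Rmul1'.
Lemma Rmul0l : left_zero 0 Rmult. Proof. move=> x; ring. Qed.
Lemma Rmul0r : right_zero 0 Rmult. Proof. move=> x; ring. Qed.
HB.instance Definition _ := Monoid.isMulLaw.Build R 0 Rmult Rmul0l Rmul0r.
Lemma RmulDr : right_distributive Rmult Rplus. Proof. move=> x y z; ring. Qed.
HB.instance Definition _ := Monoid.isAddLaw.Build R Rmult Rplus RmulDl RmulDr.

Notation "\S_ ( i < n ) F" := (\big[Rplus/0]_(i < n) F)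
  (at level 41, F at level 41, i, n at level 50).
Notation "\S_ ( i | P ) F" := (\big[Rplus/0]_(i | P) F)
  (at level 41, F at level 41, i at level 50).
Notation "\S_ ( i 'in' A ) F" := (\big[Rplus/0]_(i in A) F)
  (at level 41, F at level 41, i, A at level 50).

Lemma sumR_ge0 (I : finType) (P : pred I) (F : I -> R) :
  (forall i, P i -> 0 <= F i) -> 0 <= \big[Rplus/0]_(i | P i) F i.
Proof. move=> h; apply: big_ind => //; [lra| move=> x y; lra]. Qed.

Lemma sumR_le (I : finType) (P : pred I) (F G : I -> R) :
  (forall i, P i -> F i <= G i) ->
  \big[Rplus/0]_(i | P i) F i <= \big[Rplus/0]_(i | P i) G i.
Proof. move=> h; apply: big_ind2 => //; [lra| move=> a b c d; lra]. Qed.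

Lemma sumR_lt (I : finType) (F G : I -> R) j :
  (forall i, F i <= G i) -> F j < G j ->
  \big[Rplus/0]_(i : I) F i < \big[Rplus/0]_(i : I) G i.
Proof.
move=> h hj; rewrite (bigD1 j) //= [X in _ < X](bigD1 j) //=.
have := @sumR_le I (fun i => i != j) F G (fun i _ => h i); lra.
Qed.

Lemma sumR_term (I : finType) (F : I -> R) j :
  (forall i, 0 <= F i) -> F j <= \big[Rplus/0]_(i : I) F i.
Proof.
move=> h; rewrite (bigD1 j) //=.
have := @sumR_ge0 I (fun i => i != j) F (fun i _ => h i); lra.
Qed.

Lemma sumR_abs (I : finType) (P : pred I) (F : I -> R) :
  Rabs (\big[Rplus/0]_(i | P i) F i) <= \big[Rplus/0]_(i | P i) Rabs (F i).
Proof.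
apply: (big_ind2 (fun x y => Rabs x <= y)).
- by rewrite Rabs_R0; lra.
- move=> a b c d h1 h2; have := Rabs_triang a c; lra.
- by move=> i _; lra.
Qed.

Lemma sumR_const n (c : R) : \big[Rplus/0]_(i < n) c = INR n * c.
Proof.
elim: n => [|n IH]; first by rewrite big_ord0 /=; ring.
rewrite big_ord_recr IH S_INR /=; ring.
Qed.

Lemma sumR_split (I : finType) (P : pred I) (F G : I -> R) :
  \big[Rplus/0]_(i | P i) (F i + G i) =
  \big[Rplus/0]_(i | P i) F i + \big[Rplus/0]_(i | P i) G i.
Proof. exact: big_split. Qed.

Lemma sumR_scal (I : finType) (P : pred I) a (F : I -> R) :
  \big[Rplus/0]_(i | P i) (a * F i) = a * \big[Rplus/0]_(i | P i) F i.
Proof. by rewrite big_distrr. Qed.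

Lemma sumR_scalr (I : finType) (P : pred I) a (F : I -> R) :
  \big[Rplus/0]_(i | P i) (F i * a) = (\big[Rplus/0]_(i | P i) F i) * a.
Proof. by rewrite big_distrl. Qed.

Lemma sumR_opp (I : finType) (P : pred I) (F : I -> R) :
  \big[Rplus/0]_(i | P i) (- F i) = - \big[Rplus/0]_(i | P i) F i.
Proof.
transitivity (\big[Rplus/0]_(i | P i) (-1 * F i)).
  by apply: eq_bigr => i _; ring.
rewrite sumR_scal; ring.
Qed.

Lemma sumR_sub (I : finType) (P : pred I) (F G : I -> R) :
  \big[Rplus/0]_(i | P i) (F i - G i) =
  \big[Rplus/0]_(i | P i) F i - \big[Rplus/0]_(i | P i) G i.
Proof. by rewrite /Rminus sumR_split sumR_opp. Qed.

Lemma sumR_swap (I J : finType) (F : I -> J -> R) :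
  \big[Rplus/0]_(i : I) \big[Rplus/0]_(j : J) F i j =
  \big[Rplus/0]_(j : J) \big[Rplus/0]_(i : I) F i j.
Proof. exact: exchange_big. Qed.

Lemma sumR_delta (I : finType) (F : I -> R) j :
  \big[Rplus/0]_(i : I) (if i == j then F i else 0) = F j.
Proof.
rewrite (bigD1 j) //= eqxx big1 ?Rplus_0_r // => i /negPf ->; by [].
Qed.

Lemma sumR_delta' (I : finType) (F : I -> R) j :
  \big[Rplus/0]_(i : I) (if j == i then F i else 0) = F j.
Proof.
rewrite -(sumR_delta F j); apply: eq_bigr => i _; by rewrite eq_sym.
Qed.

Lemma sumR_eq0 (I : finType) (F : I -> R) :
  (forall i, 0 <= F i) -> \big[Rplus/0]_(i : I) F i = 0 -> forall i, F i = 0.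
Proof.
move=> h hs i; have := @sumR_term _ F i h; have := h i; lra.
Qed.

Definition lin2 n a (u : vec n) b (v : vec n) : vec n := fun i => a * u i + b * v i.
Definition nrm2 n (v : vec n) := dot v v.

Lemma dotC n (u v : vec n) : dot u v = dot v u.
Proof. by apply: eq_bigr => i _; ring. Qed.

Lemma dot_lin2l n a (u : vec n) b v w : dot (lin2 a u b v) w = a * dot u w + b * dot v w.
Proof.
rewrite /dot /lin2 -!sumR_scal -sumR_split; apply: eq_bigr => i _; ring.
Qed.

Lemma dot_lin2r n a (u : vec n) b v w : dot w (lin2 a u b v) = a * dot w u + b * dot w v.
Proof. by rewrite dotC dot_lin2l !(dotC w). Qed.

Lemma dot_scall n a (u v : vec n) : dot (fun i => a * u i) v = a * dot u v.
Proof. by rewrite /dot -sumR_scal; apply: eq_bigr => i _; ring. Qed.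

Lemma dot_scalr n a (u v : vec n) : dot v (fun i => a * u i) = a * dot v u.
Proof. by rewrite dotC dot_scall dotC. Qed.

Lemma nrm2_ge0 n (v : vec n) : 0 <= nrm2 v.
Proof. apply: sumR_ge0 => i _; nra. Qed.

Lemma nrm2_eq0 n (v : vec n) : nrm2 v = 0 -> forall i, v i = 0.
Proof.
move=> h i; have := @sumR_eq0 _ (fun i => v i * v i) (fun i => ltac:(nra)) h i; nra.
Qed.

Lemma nrm2_pos n (v : vec n) i : v i <> 0 -> 0 < nrm2 v.
Proof.
move=> h; have := nrm2_ge0 v; case/Rle_lt_or_eq_dec => // /esym/nrm2_eq0/(_ i); tauto.
Qed.

Lemma CS n (u v : vec n) : (dot u v)^2 <= nrm2 u * nrm2 v.
Proof.
have hv := nrm2_ge0 v; have hu := nrm2_ge0 u.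
case: (Req_EM_T (nrm2 v) 0) => h0.
  have e : dot u v = 0.
    rewrite /dot big1 // => i _; rewrite (nrm2_eq0 h0 i); ring.
  rewrite e h0; lra.
set t := dot u v / nrm2 v.
have ht : t * nrm2 v = dot u v by rewrite /t; field.
have := nrm2_ge0 (lin2 1 u (- t) v).
rewrite /nrm2 dot_lin2l !dot_lin2r (dotC v u) -/(nrm2 u) -/(nrm2 v) => h.
have h2 : 0 <= nrm2 u - t * dot u v by nra.
have : (dot u v)^2 = t * dot u v * nrm2 v by rewrite -ht; ring.
nra.
Qed.

Lemma orth_cols n (o : 'I_n -> vec n) :
  orthonormal_basis o ->
  forall i j, \big[Rplus/0]_(k < n) (o k i * o k j) = if i == j then 1 else 0.
Proof.
move=> ho.
pose Om : 'M[R]_n := (\matrix_(k, i) o k i)%ring.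
have h : (Om *m Om^T = 1%:M)%ring.
  apply/matrixP => a b; rewrite !mxE.
  transitivity (dot (o a) (o b)).
    by apply: eq_bigr => k _; rewrite !mxE.
  by rewrite ho; case: (a == b).
move/mulmx1C/matrixP: h => h i j; move: (h i j); rewrite !mxE => e.
transitivity ((i == j)%:R : R)%ring; last by case: (i == j).
rewrite -e; by apply: eq_bigr => k _; rewrite !mxE.
Qed.

Lemma inv_or_ker n (B : mat n) :
  (exists y : vec n, (exists i, y i <> 0) /\ forall i, mulv B y i = 0) \/
  (exists C : mat n, forall x i, mulv C (mulv B x) i = x i).
Proof.
pose Bm : 'M[R]_n := (\matrix_(i, j) B i j)%ring.
case: (boolP (Bm \in unitmx)) => hu.
  right; exists (fun i j => invmx Bm i j) => x i.
  have e := mulVmx hu.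
  rewrite /mulv.
  transitivity (\big[Rplus/0]_(k < n) ((\big[Rplus/0]_(j < n) (invmx Bm i j * Bm j k)) * x k)).
    rewrite (eq_bigr (fun j => \big[Rplus/0]_(k < n) (invmx Bm i j * B j k * x k))); last first.
      by move=> j _; rewrite -sumR_scal; apply: eq_bigr => k _; ring.
    rewrite sumR_swap; apply: eq_bigr => k _; rewrite -sumR_scalr; apply: eq_bigr => j _.
    by rewrite mxE.
  transitivity (\big[Rplus/0]_(k < n) (if k == i then x k else 0)); last by rewrite sumR_delta.
  apply: eq_bigr => k _.
  have := congr1 (fun M : 'M[R]_n => M i k) e; rewrite !mxE => e2.
  have -> : \big[Rplus/0]_(j < n) (invmx Bm i j * Bm j k) = ((i == k)%:R : R)%ring by rewrite -e2.
  rewrite eq_sym; case: (k == i) => /=; [change (1 * x k = x k) | change (0 * x k = 0)]; ring.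
left.
have hk : kermx Bm^T != 0%ring.
  by rewrite kermx_eq0 row_free_unit unitmx_tr.
have [i [j hij]] : exists i j, kermx Bm^T i j <> 0.
  apply: NNPP => hn; move/eqP: hk => hk; apply: hk; apply/matrixP => a b.
  apply: NNPP => hab; apply: hn; exists a, b => e; apply: hab; rewrite e; by rewrite mxE.
exists (fun k => kermx Bm^T i k); split; first by exists j.
move=> l; have e := congr1 (fun M : 'M[R]_(n, n) => M i l) (mulmx_ker Bm^T).
rewrite /= [X in _ = X]mxE [X in X = _]mxE in e.
rewrite /mulv -[RHS]/(@GRing.zero R) -e; apply: eq_bigr => k _.
rewrite [(Bm^T)%ring _ _]mxE [Bm _ _]mxE; change (B l k * kermx Bm^T i k = kermx Bm^T i k * B l k); ring.
Qed.

Lemma orth_exists n k (hk : (k < n)%N) (o : 'I_n -> vec n) :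
  exists y : vec n, (exists i, y i <> 0) /\ forall i : 'I_n, (i < k)%N -> dot y (o i) = 0.
Proof.
have hkn : (k <= n)%N by apply: ltnW.
pose Mt : 'M[R]_(n, k) := (\matrix_(b, i) o (widen_ord hkn i) b)%ring.
have hk0 : kermx Mt != 0%ring.
  rewrite kermx_eq0 /row_free; apply/negP => /eqP e.
  have := rank_leq_col Mt; rewrite e => h.
  by move: (leq_trans hk h); rewrite ltnn.
have [a [j haj]] : exists a j, kermx Mt a j <> 0.
  apply: NNPP => hn; move/eqP: hk0 => hk0; apply: hk0; apply/matrixP => c b.
  apply: NNPP => hab; apply: hn; exists c, b => e; apply: hab; rewrite e; by rewrite mxE.
exists (fun b => kermx Mt a b); split; first by exists j.
move=> i hi.
have e := congr1 (fun M : 'M[R]_(n, k) => M a (Ordinal hi)) (mulmx_ker Mt).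
rewrite /= [X in _ = X]mxE [X in X = _]mxE in e.
rewrite /dot -[RHS]/(@GRing.zero R) -e; apply: eq_bigr => b _.
rewrite [Mt _ _]mxE.
have -> : widen_ord hkn (Ordinal hi) = i by apply: val_inj.
by [].
Qed.

Definition frob n (A : mat n) := \big[Rplus/0]_(i < n) \big[Rplus/0]_(j < n) (A i j * A i j).

Lemma frob_ge0 n (A : mat n) : 0 <= frob A.
Proof. apply: sumR_ge0 => i _; apply: sumR_ge0 => j _; nra. Qed.

Lemma dot_mulv n (A : mat n) x y :
  dot y (mulv A x) = \big[Rplus/0]_(i < n) \big[Rplus/0]_(j < n) (y i * A i j * x j).
Proof. rewrite /dot /mulv; apply: eq_bigr => i _; rewrite -sumR_scal; apply: eq_bigr => j _; ring. Qed.

Lemma dot_mulvT n (A : mat n) x y :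
  dot (mulv A x) y = \big[Rplus/0]_(j < n) \big[Rplus/0]_(i < n) (y i * A i j * x j).
Proof. by rewrite dotC dot_mulv sumR_swap. Qed.

Lemma sym_dot n (S : mat n) x y : symmetric S -> dot (mulv S x) y = dot x (mulv S y).
Proof.
move=> hS; rewrite dot_mulvT dot_mulv; apply: eq_bigr => j _; apply: eq_bigr => i _.
rewrite (hS i j); ring.
Qed.

Lemma skew_dot n (L : mat n) x y : skew L -> dot (mulv L x) y = - dot x (mulv L y).
Proof.
move=> hL; rewrite dot_mulvT dot_mulv -sumR_opp; apply: eq_bigr => j _.
rewrite -sumR_opp; apply: eq_bigr => i _; rewrite (hL i j); ring.
Qed.

Lemma frob_bound n (A : mat n) v : nrm2 (mulv A v) <= frob A * nrm2 v.
Proof.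
rewrite /nrm2 /frob -sumR_scalr {1}/dot; apply: sumR_le => i _.
have := CS (A i) v.
have -> : (dot (A i) v) = mulv A v i by [].
have -> : nrm2 (A i) = \big[Rplus/0]_(j < n) (A i j * A i j) by [].
rewrite /nrm2; nra.
Qed.

Lemma bil_bound n (A : mat n) u v : (dot u (mulv A v))^2 <= nrm2 u * (frob A * nrm2 v).
Proof.
have := CS u (mulv A v); have := frob_bound A v; have := nrm2_ge0 u; nra.
Qed.

Lemma parseval_v n (o : 'I_n -> vec n) : orthonormal_basis o ->
  forall v i, v i = \big[Rplus/0]_(k < n) (dot (o k) v * o k i).
Proof.
move=> ho v i.
rewrite (eq_bigr (fun k => \big[Rplus/0]_(j < n) (v j * (o k j * o k i)))); last first.
  by move=> k _; rewrite /dot -sumR_scalr; apply: eq_bigr => j _; ring.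
rewrite sumR_swap.
rewrite (eq_bigr (fun j => if j == i then v j else 0)).
  by rewrite sumR_delta.
move=> j _; rewrite sumR_scal orth_cols //; case: (j == i); ring.
Qed.

Lemma parseval_dot n (o : 'I_n -> vec n) : orthonormal_basis o ->
  forall u v, dot u v = \big[Rplus/0]_(k < n) (dot (o k) u * dot (o k) v).
Proof.
move=> ho u v.
transitivity (\big[Rplus/0]_(i < n) ((\big[Rplus/0]_(k < n) (dot (o k) u * o k i)) * v i)).
  by apply: eq_bigr => i _; rewrite -parseval_v.
rewrite (eq_bigr (fun i => \big[Rplus/0]_(k < n) (dot (o k) u * (o k i * v i)))); last first.
  by move=> i _; rewrite -sumR_scalr; apply: eq_bigr => k _; ring.
rewrite sumR_swap; apply: eq_bigr => k _; by rewrite sumR_scal.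
Qed.

Lemma parseval_nrm n (o : 'I_n -> vec n) : orthonormal_basis o ->
  forall v, nrm2 v = \big[Rplus/0]_(k < n) (dot (o k) v)^2.
Proof. move=> ho v; rewrite /nrm2 (parseval_dot ho); apply: eq_bigr => k _; ring. Qed.

Lemma unit_entry n (v : vec n) i : nrm2 v = 1 -> Rabs (v i) <= 1.
Proof.
move=> h; have := @sumR_term _ (fun j => v j * v j) i (fun j => ltac:(nra)).
rewrite -/(dot v v) -/(nrm2 v) h => hi.
apply: Rabs_le; nra.
Qed.

Lemma mulv_lin2 n (M : mat n) a u b v :
  mulv M (lin2 a u b v) = lin2 a (mulv M u) b (mulv M v).
Proof.
apply: functional_extensionality => i; rewrite /mulv /lin2 -!sumR_scal -sumR_split.
by apply: eq_bigr => j _; ring.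
Qed.

Lemma Rle_div_l a b c : 0 < b -> (a / b <= c <-> a <= c * b).
Proof.
move=> hb; split => h.
  have : a / b * b <= c * b by apply: Rmult_le_compat_r; lra.
  by have -> : a / b * b = a by field; lra.
have : a * / b <= c * b * / b by apply: Rmult_le_compat_r => //; apply/Rlt_le/Rinv_0_lt_compat.
by have -> : c * b * / b = c by field; lra.
Qed.

Lemma Rlt_div_l a b c : 0 < b -> (a / b < c <-> a < c * b).
Proof.
move=> hb; split => h.
  have : a / b * b < c * b by apply: Rmult_lt_compat_r; lra.
  by have -> : a / b * b = a by field; lra.
have : a * / b < c * b * / b by apply: Rmult_lt_compat_r => //; apply/Rinv_0_lt_compat.
by have -> : c * b * / b = c by field; lra.
Qed.

Lemma quad_bound q F N : q^2 <= F * N^2 -> 0 <= F -> 0 <= N -> Rabs q <= (F + 1) * N.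
Proof.
move=> h hF hN; apply: Rnot_lt_le => hc.
have h1 : 0 <= (F + 1) * N by nra.
have : ((F + 1) * N)^2 < (Rabs q)^2 by nra.
rewrite -Rsqr_pow2 -Rsqr_pow2 -Rsqr_abs Rsqr_pow2 Rsqr_pow2 => h2; nra.
Qed.

Lemma quad_form_bound n (S : mat n) x : Rabs (dot x (mulv S x)) <= (frob S + 1) * nrm2 x.
Proof.
apply: quad_bound; [| exact: frob_ge0| exact: nrm2_ge0].
have := bil_bound S x x; nra.
Qed.

Definition idm n (c : R) : mat n := fun a b => if a == b then c else 0.

Lemma mulv_idm n c (x : vec n) a : mulv (idm c) x a = c * x a.
Proof.
rewrite /mulv /idm (eq_bigr (fun b => if a == b then c * x b else 0)).
  by rewrite sumR_delta'.
by move=> b _; case: (a == b); ring.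
Qed.

Lemma spec_step n (S : mat n) (hS : symmetric S) k (hk : (k < n)%N)
  (o : 'I_n -> vec n) (mu : 'I_n -> R) :
  (forall i j : 'I_n, (i < k)%N -> (j < k)%N -> dot (o i) (o j) = if i == j then 1 else 0) ->
  (forall i : 'I_n, (i < k)%N -> forall a, mulv S (o i) a = mu i * o i a) ->
  exists w lam, nrm2 w = 1 /\ (forall i : 'I_n, (i < k)%N -> dot w (o i) = 0) /\
    forall a, mulv S w a = lam * w a.
Proof.
move=> horth heig.
pose W (x : vec n) := forall i : 'I_n, (i < k)%N -> dot x (o i) = 0.
have Wlin : forall a x b y, W x -> W y -> W (lin2 a x b y).
  move=> a x b y hx hy i hi; rewrite dot_lin2l hx // hy //; ring.
have WS : forall x, W x -> W (mulv S x).
  move=> x hx i hi; rewrite sym_dot //.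
  have -> : mulv S (o i) = (fun a => mu i * o i a).
    by apply: functional_extensionality => a; apply: heig.
  by rewrite dot_scalr hx //; ring.
pose Kb := frob S + 1.
have hKb : forall x, dot x (mulv S x) <= Kb * nrm2 x.
  move=> x; have := quad_form_bound S x; rewrite /Kb => h.
  have := Rle_abs (dot x (mulv S x)); lra.
pose E r := exists x, W x /\ nrm2 x <> 0 /\ r = dot x (mulv S x) / nrm2 x.
have Eb : bound E.
  exists Kb => r [x [hx [h0 ->]]].
  have hp : 0 < nrm2 x by have := nrm2_ge0 x; lra.
  apply/Rle_div_l => //; exact: hKb.
have Ene : exists r, E r.
  have [y [[i hy] hyo]] := orth_exists hk o.
  exists (dot y (mulv S y) / nrm2 y), y; split => //; split => //.
  have := nrm2_pos hy; lra.
have [lam [lub1 lub2]] := completeness E Eb Ene.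
have hup : forall x, W x -> dot x (mulv S x) <= lam * nrm2 x.
  move=> x hx; case: (Req_EM_T (nrm2 x) 0) => h0.
    rewrite h0 /dot big1 ?Rmult_0_r; first lra.
    by move=> i _; rewrite (nrm2_eq0 h0 i); ring.
  have hp : 0 < nrm2 x by have := nrm2_ge0 x; lra.
  have : dot x (mulv S x) / nrm2 x <= lam by apply: lub1; exists x.
  move/Rle_div_l => /(_ hp); lra.
have happ : forall eta, 0 < eta -> exists x, W x /\ 0 < nrm2 x /\
    lam * nrm2 x - dot x (mulv S x) < eta * nrm2 x.
  move=> eta heta; apply: NNPP => hn.
  have : lam <= lam - eta; last lra.
  apply: lub2 => r [x [hx [h0 ->]]].
  have hp : 0 < nrm2 x by have := nrm2_ge0 x; lra.
  apply/Rle_div_l => //; apply: Rnot_lt_le => hc; apply: hn; exists x; split => //; split => //.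
  lra.
pose Am : mat n := fun a b => idm lam a b - S a b.
have mulvA : forall x a, mulv Am x a = lam * x a - mulv S x a.
  move=> x a; rewrite -mulv_idm /mulv /Am -sumR_sub; apply: eq_bigr => b _; ring.
have Asym : symmetric Am.
  move=> a b; rewrite /Am /idm (hS a b) eq_sym; by [].
have WA : forall x, W x -> W (mulv Am x).
  move=> x hx.
  have -> : mulv Am x = lin2 lam x (-1) (mulv S x).
    by apply: functional_extensionality => a; rewrite mulvA /lin2; ring.
  by apply: Wlin => //; apply: WS.
have qpos : forall x, W x -> 0 <= dot x (mulv Am x).
  move=> x hx.
  have -> : mulv Am x = lin2 lam x (-1) (mulv S x).
    by apply: functional_extensionality => a; rewrite mulvA /lin2; ring.
  rewrite dot_lin2r; have := hup x hx; rewrite /nrm2; lra.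
pose K2 := Rabs lam + Kb + 1.
have hK2 : 0 < K2 by have := Rabs_pos lam; rewrite /K2 /Kb; have := frob_ge0 S; lra.
have qbound : forall y, dot y (mulv Am y) <= (K2 - 1) * nrm2 y.
  move=> y.
  have -> : mulv Am y = lin2 lam y (-1) (mulv S y).
    by apply: functional_extensionality => a; rewrite mulvA /lin2; ring.
  rewrite dot_lin2r -/(nrm2 y).
  have h4 := quad_form_bound S y.
  have h5 := Rle_abs (- dot y (mulv S y)); rewrite Rabs_Ropp in h5.
  have h6 := Rle_abs lam; have h7 := nrm2_ge0 y.
  rewrite /K2 -/Kb in h4 *.
  have : lam * nrm2 y <= Rabs lam * nrm2 y by nra.
  lra.
have keyA : forall x, W x -> nrm2 (mulv Am x) <= K2 * dot x (mulv Am x).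
  move=> x hx.
  set y := mulv Am x.
  have hy : W y by apply: WA.
  set s := / K2.
  have hs : 0 < s by apply: Rinv_0_lt_compat.
  have hsK : s * K2 = 1 by rewrite /s; field; lra.
  have := qpos _ (Wlin 1 x (- s) y hx hy).
  rewrite mulv_lin2 dot_lin2l !dot_lin2r.
  have e1 : dot y (mulv Am x) = nrm2 y by [].
  have e2 : dot x (mulv Am y) = nrm2 y by rewrite -sym_dot.
  rewrite e1 e2.
  have := qbound y; have := nrm2_ge0 y; move=> h1 h2 h3.
  have h4 : s * s * dot y (mulv Am y) <= s * nrm2 y.
    have : s * s * dot y (mulv Am y) <= s * s * ((K2 - 1) * nrm2 y).
      by apply: Rmult_le_compat_l; nra.
    have : s * s * ((K2 - 1) * nrm2 y) <= s * nrm2 y.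
      have -> : s * s * ((K2 - 1) * nrm2 y) = s * nrm2 y * (s * K2 - s) by ring.
      rewrite hsK; have : 0 <= s * nrm2 y by nra. nra.
    lra.
  have : s * nrm2 y <= dot x (mulv Am x) by nra.
  move=> h5; have := Rmult_le_compat_l K2 _ _ (Rlt_le _ _ hK2) h5.
  have -> : K2 * (s * nrm2 y) = nrm2 y by rewrite -Rmult_assoc (Rmult_comm K2) hsK; ring.
  by [].
pose Pm : mat n := fun a b => \big[Rplus/0]_(i < n | (i < k)%N) (o i a * o i b).
have mulvP : forall x a, mulv Pm x a = \big[Rplus/0]_(i < n | (i < k)%N) (dot (o i) x * o i a).
  move=> x a; rewrite /mulv /Pm.
  rewrite (eq_bigr (fun b => \big[Rplus/0]_(i < n | (i < k)%N) (o i a * o i b * x b))); last first.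
    by move=> b _; rewrite sumR_scalr.
  rewrite exchange_big; apply: eq_bigr => i _; rewrite /dot -sumR_scalr; apply: eq_bigr => b _; ring.
have PW : forall x, W x -> forall a, mulv Pm x a = 0.
  move=> x hx a; rewrite mulvP big1 // => i hi; rewrite dotC hx //; ring.
have Pdot : forall x (j : 'I_n), (j < k)%N -> dot (mulv Pm x) (o j) = dot (o j) x.
  move=> x j hj.
  have -> : mulv Pm x = (fun a => \big[Rplus/0]_(i < n | (i < k)%N) (dot (o i) x * o i a)).
    by apply: functional_extensionality => a; apply: mulvP.
  transitivity (\big[Rplus/0]_(a < n) ((\big[Rplus/0]_(i < n | (i < k)%N) (dot (o i) x * o i a)) * o j a)); first by [].
  rewrite (eq_bigr (fun a => \big[Rplus/0]_(i < n | (i < k)%N) (dot (o i) x * (o i a * o j a)))); last first.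
    by move=> a _; rewrite -sumR_scalr; apply: eq_bigr => i _; ring.
  rewrite exchange_big /=.
  rewrite (eq_bigr (fun i => if i == j then dot (o i) x else 0)); last first.
    move=> i hi; rewrite sumR_scal; have := horth i j hi hj; rewrite /dot => ->.
    case: (i == j); ring.
  rewrite (bigD1 j) //= eqxx big1 ?Rplus_0_r // => i /andP [_ /negPf ->] //.
pose t := 1 + \big[Rplus/0]_(i < n) Rabs (lam - mu i).
pose Bm : mat n := fun a b => Am a b + t * Pm a b.
have mulvB : forall x a, mulv Bm x a = mulv Am x a + t * mulv Pm x a.
  move=> x a; rewrite /mulv /Bm -sumR_scal -sumR_split; apply: eq_bigr => b _; ring.
case: (inv_or_ker Bm) => [[y [[i0 hy0] hy]] | [C hC]]; last first.
  exfalso.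
  pose eta := / (2 * K2 * (frob C + 1)).
  have hFC := frob_ge0 C.
  have heta : 0 < eta by apply: Rinv_0_lt_compat; nra.
  have [x [hx [hp hq]]] := happ eta heta.
  have e1 : mulv C (mulv Bm x) = x by apply: functional_extensionality => a; apply: hC.
  have e2 : mulv Bm x = mulv Am x.
    by apply: functional_extensionality => a; rewrite mulvB PW //; ring.
  have h1 := frob_bound C (mulv Bm x); rewrite e1 e2 in h1.
  have h2 := keyA x hx.
  have e3 : dot x (mulv Am x) = lam * nrm2 x - dot x (mulv S x).
    have -> : mulv Am x = lin2 lam x (-1) (mulv S x).
      by apply: functional_extensionality => a; rewrite mulvA /lin2; ring.
    rewrite dot_lin2r /nrm2; ring.
  rewrite e3 in h2.
  have h3 : nrm2 (mulv Am x) <= K2 * (eta * nrm2 x) by nra.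
  have h4 : nrm2 x <= frob C * (K2 * (eta * nrm2 x)) by have := nrm2_ge0 (mulv Am x); nra.
  have h5 : frob C * (K2 * eta) < 1.
    rewrite /eta.
    have -> : frob C * (K2 * / (2 * K2 * (frob C + 1))) = frob C / (2 * (frob C + 1)).
      field; lra.
    apply/Rlt_div_l; nra.
  nra.
have dot0 : forall v : vec n, dot (fun _ => 0) v = 0.
  by move=> v; rewrite /dot big1 // => a _; ring.
have By0 : mulv Bm y = lin2 1 (mulv Am y) t (mulv Pm y).
  by apply: functional_extensionality => a; rewrite mulvB /lin2; ring.
have hyW : W y.
  move=> j hj.
  have e0 : dot (mulv Bm y) (o j) = 0.
    have -> : mulv Bm y = (fun _ => 0) by apply: functional_extensionality => a; apply: hy.
    exact: dot0.
  rewrite By0 dot_lin2l Pdot // in e0.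
  have e1 : dot (mulv Am y) (o j) = (lam - mu j) * dot y (o j).
    rewrite sym_dot //.
    have -> : mulv Am (o j) = lin2 (lam - mu j) (o j) 0 (o j).
      by apply: functional_extensionality => a; rewrite mulvA heig // /lin2; ring.
    rewrite dot_lin2r; ring.
  rewrite e1 (dotC (o j)) in e0.
  have ht : 1 + Rabs (lam - mu j) <= t.
    rewrite /t; have := @sumR_term _ (fun i => Rabs (lam - mu i)) j (fun i => Rabs_pos _) => /= h; lra.
  have := Rle_abs (- (lam - mu j)); rewrite Rabs_Ropp => h.
  have hc : 0 < lam - mu j + t by lra.
  have : (lam - mu j + t) * dot y (o j) = 0 by lra.
  case/Rmult_integral => //; lra.
have hSy : forall a, mulv S y a = lam * y a.
  move=> a; have := hy a; rewrite mulvB PW // mulvA; lra.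
have hN : 0 < nrm2 y := nrm2_pos hy0.
pose c := / sqrt (nrm2 y).
have hsq : 0 < sqrt (nrm2 y) by apply: sqrt_lt_R0.
have hc2 : c * c * nrm2 y = 1.
  rewrite /c; have := sqrt_sqrt (nrm2 y) (Rlt_le _ _ hN) => e.
  rewrite -{3}e; field; lra.
exists (fun a => c * y a), lam; split; [|split].
- rewrite /nrm2 dot_scall dot_scalr -/(nrm2 y); lra.
- by move=> i hi; rewrite dot_scall hyW //; ring.
- move=> a; have -> : (fun a => c * y a) = lin2 c y 0 y.
    by apply: functional_extensionality => b; rewrite /lin2; ring.
  rewrite mulv_lin2 /lin2 hSy; ring.
Qed.

Lemma spec_all n (S : mat n) (hS : symmetric S) k : (k <= n)%N ->
  exists (o : 'I_n -> vec n) (mu : 'I_n -> R),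
  (forall i j : 'I_n, (i < k)%N -> (j < k)%N -> dot (o i) (o j) = if i == j then 1 else 0) /\
  (forall i : 'I_n, (i < k)%N -> forall a, mulv S (o i) a = mu i * o i a).
Proof.
elim: k => [|k IH] hk.
  by exists (fun _ _ => 0), (fun _ => 0); split.
have hk' : (k < n)%N by [].
have [o [mu [ho he]]] := IH (ltnW hk').
have [w [lam [hw1 [hwo hwe]]]] := spec_step hS hk' ho he.
exists (fun i : 'I_n => if (i : nat) == k then w else o i), (fun i : 'I_n => if (i : nat) == k then lam else mu i).
split.
- move=> i j hi hj; rewrite ltnS leq_eqVlt in hi; rewrite ltnS leq_eqVlt in hj.
  case/orP: hi => [/eqP hi|hi]; case/orP: hj => [/eqP hj|hj].
  + rewrite hi hj eqxx; have -> : i = j by apply: val_inj; rewrite /= hi hj.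
    by rewrite eqxx.
  + rewrite hi eqxx (ltn_eqF hj) hwo //.
    by case: eqP => // e; move: hj; rewrite -e hi ltnn.
  + rewrite hj eqxx (ltn_eqF hi) dotC hwo //.
    by case: eqP => // e; move: hi; rewrite e hj ltnn.
  + by rewrite (ltn_eqF hi) (ltn_eqF hj) ho.
- move=> i hi a; rewrite ltnS leq_eqVlt in hi.
  case/orP: hi => [/eqP hi|hi].
    by rewrite hi eqxx hwe.
  by rewrite (ltn_eqF hi) he.
Qed.

Lemma spectral n (S : mat n) (hS : symmetric S) :
  exists (o : 'I_n -> vec n) (mu : 'I_n -> R),
  orthonormal_basis o /\ forall i a, mulv S (o i) a = mu i * o i a.
Proof.
have [o [mu [ho he]]] := spec_all hS (leqnn n).
by exists o, mu; split => [i j|i]; [apply: ho | apply: he].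
Qed.

Lemma sum_inJ n (J : {set 'I_n}) (F : 'I_n -> R) :
  (forall k, k \notin J -> F k = 0) ->
  \big[Rplus/0]_(k < n) F k = \big[Rplus/0]_(k in J) F k.
Proof.
move=> h; rewrite (bigID (mem J)) /= [X in _ + X]big1 ?Rplus_0_r.
  by apply: eq_bigl.
by move=> k; apply: h.
Qed.

Lemma not_inv_entry n (o : 'I_n -> vec n) (L : mat n) (J : {set 'I_n}) j k :
  orthonormal_basis o -> j \in J -> k \notin J ->
  dot (o k) (mulv L (o j)) <> 0 -> ~ invariant L (in_span J o).
Proof.
move=> ho hj hk hne hinv.
have hsp : in_span J o (o j).
  exists (fun i => if i == j then 1 else 0) => a.
  rewrite (bigD1 j) //= eqxx big1 ?Rplus_0_r; first ring.
  by move=> i /andP [_ /negPf ->]; ring.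
have [c hc] := hinv _ hsp.
apply: hne.
have -> : mulv L (o j) = (fun a => \big[Rplus/0]_(i in J) (c i * o i a)).
  by apply: functional_extensionality => a; apply: hc.
rewrite /dot.
rewrite (eq_bigr (fun a => \big[Rplus/0]_(i in J) (c i * (o k a * o i a)))); last first.
  by move=> a _; rewrite -sumR_scal; apply: eq_bigr => i _; ring.
rewrite exchange_big /= big1 // => i hi.
rewrite sumR_scal; have := ho k i; rewrite /dot => ->.
case: eqP => [e|]; last by move=> _; ring.
by move: hk; rewrite e hi.
Qed.

Lemma inv_of_zero n (o : 'I_n -> vec n) (L : mat n) (J : {set 'I_n}) :
  orthonormal_basis o ->
  (forall j k, j \in J -> k \notin J -> dot (o k) (mulv L (o j)) = 0) ->
  invariant L (in_span J o).
Proof.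
move=> ho h v [c hc].
exists (fun k => \big[Rplus/0]_(i in J) (c i * dot (o k) (mulv L (o i)))) => a.
have -> : v = (fun a => \big[Rplus/0]_(i in J) (c i * o i a)).
  by apply: functional_extensionality => b; apply: hc.
have e1 : forall i, i \in J -> mulv L (o i) a =
     \big[Rplus/0]_(k in J) (dot (o k) (mulv L (o i)) * o k a).
  move=> i hi; rewrite (parseval_v ho (mulv L (o i)) a).
  by apply: sum_inJ => k hk; rewrite h //; ring.
transitivity (\big[Rplus/0]_(i in J) (c i * mulv L (o i) a)).
  rewrite /mulv.
  rewrite (eq_bigr (fun b => \big[Rplus/0]_(i in J) (c i * (L a b * o i b)))); last first.
    by move=> b _; rewrite -sumR_scal; apply: eq_bigr => i _; ring.
  rewrite exchange_big /=; apply: eq_bigr => i _; by rewrite sumR_scal.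
rewrite (eq_bigr (fun i => \big[Rplus/0]_(k in J) (c i * dot (o k) (mulv L (o i)) * o k a))); last first.
  by move=> i hi; rewrite e1 // -sumR_scal; apply: eq_bigr => k _; ring.
rewrite exchange_big /=; apply: eq_bigr => k _; by rewrite sumR_scalr.
Qed.

Lemma noninv_witness n (o : 'I_n -> vec n) (L : mat n) :
  orthonormal_basis o -> skew L -> ~ L_invar o L ->
  forall J : {set 'I_n}, (0 < #|J|)%N -> (#|J| < n)%N ->
  exists j k, j \in J /\ k \notin J /\ dot (o k) (mulv L (o j)) <> 0.
Proof.
move=> ho hL hn J h1 h2; apply: NNPP => hc; apply: hn; split => //.
exists J; split => //; split => //; apply: inv_of_zero => // j k hj hk.
apply: NNPP => hne; apply: hc; by exists j, k.
Qed.

Lemma noninv_of_witness n (o : 'I_n -> vec n) (L : mat n) :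
  orthonormal_basis o ->
  (forall J : {set 'I_n}, (0 < #|J|)%N -> (#|J| < n)%N ->
   exists j k, j \in J /\ k \notin J /\ dot (o k) (mulv L (o j)) <> 0) ->
  ~ L_invar o L.
Proof.
move=> ho h [_ [J [h1 [h2 hi]]]].
have [j [k [hj [hk hne]]]] := h J h1 h2.
exact: (not_inv_entry ho hj hk hne hi).
Qed.

Lemma all_offdiag n (o : 'I_n -> vec n) (L : mat n) :
  orthonormal_basis o ->
  (forall j k, j != k -> dot (o k) (mulv L (o j)) <> 0) -> ~ L_invar o L.
Proof.
move=> ho h; apply: noninv_of_witness => // J h1 h2.
have [j hj] : exists j, j \in J.
  by apply/card_gt0P.
have [k hk] : exists k, k \notin J.
  apply: NNPP => hn; have : J = setT.
    apply/setP => x; rewrite inE; apply: NNPP => hx; apply: hn; exists x.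
    by apply/negP => hxJ; apply: hx; rewrite hxJ.
  by move=> e; move: h2; rewrite e cardsT card_ord ltnn.
exists j, k; split => //; split => //; apply: h.
by apply/eqP => e; move: hk; rewrite -e hj.
Qed.

Definition rk1 n (w : 'I_n -> 'I_n -> R) (o : 'I_n -> vec n) : mat n :=
  fun a b => \big[Rplus/0]_(p < n) \big[Rplus/0]_(q < n) (w p q * o p a * o q b).
Definition madd n (A B : mat n) : mat n := fun a b => A a b + B a b.

Lemma mulv_madd n (A B : mat n) x a : mulv (madd A B) x a = mulv A x a + mulv B x a.
Proof. by rewrite /mulv /madd -sumR_split; apply: eq_bigr => b _; ring. Qed.

Lemma mulv_rk1 n w (o : 'I_n -> vec n) x a :
  mulv (rk1 w o) x a = \big[Rplus/0]_(p < n) \big[Rplus/0]_(q < n) (w p q * o p a * dot (o q) x).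
Proof.
rewrite /mulv /rk1.
rewrite (eq_bigr (fun b => \big[Rplus/0]_(p < n) \big[Rplus/0]_(q < n) (w p q * o p a * (o q b * x b)))); last first.
  move=> b _; rewrite -sumR_scalr; apply: eq_bigr => p _; rewrite -sumR_scalr.
  by apply: eq_bigr => q _; ring.
rewrite exchange_big; apply: eq_bigr => p _; rewrite exchange_big; apply: eq_bigr => q _.
by rewrite /dot sumR_scal.
Qed.

Lemma mulv_rk1_o n w (o : 'I_n -> vec n) j a : orthonormal_basis o ->
  mulv (rk1 w o) (o j) a = \big[Rplus/0]_(p < n) (w p j * o p a).
Proof.
move=> ho; rewrite mulv_rk1; apply: eq_bigr => p _.
rewrite (eq_bigr (fun q => if q == j then w p q * o p a else 0)).
  by rewrite sumR_delta.
by move=> q _; rewrite ho; case: (q == j); ring.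
Qed.

Lemma dot_rk1_o n w (o : 'I_n -> vec n) j k : orthonormal_basis o ->
  dot (o k) (mulv (rk1 w o) (o j)) = w k j.
Proof.
move=> ho.
have -> : mulv (rk1 w o) (o j) = (fun a => \big[Rplus/0]_(p < n) (w p j * o p a)).
  by apply: functional_extensionality => a; apply: mulv_rk1_o.
rewrite /dot.
rewrite (eq_bigr (fun a => \big[Rplus/0]_(p < n) (w p j * (o k a * o p a)))); last first.
  by move=> a _; rewrite -sumR_scal; apply: eq_bigr => p _; ring.
rewrite exchange_big /=.
rewrite (eq_bigr (fun p => if p == k then w p j else 0)).
  by rewrite sumR_delta.
move=> p _; rewrite sumR_scal; have := ho k p; rewrite /dot => ->.
by rewrite eq_sym; case: (p == k); ring.
Qed.

Lemma rk1_bound n w (o : 'I_n -> vec n) a b : orthonormal_basis o ->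
  Rabs (rk1 w o a b) <= \big[Rplus/0]_(p < n) \big[Rplus/0]_(q < n) Rabs (w p q).
Proof.
move=> ho; apply: Rle_trans (sumR_abs _ _) _; apply: sumR_le => p _.
apply: Rle_trans (sumR_abs _ _) _; apply: sumR_le => q _.
have h1 : nrm2 (o p) = 1 by rewrite /nrm2 ho eqxx.
have h2 : nrm2 (o q) = 1 by rewrite /nrm2 ho eqxx.
have := unit_entry a h1; have := unit_entry b h2.
rewrite !Rabs_mult => e1 e2.
have f1 := Rabs_pos (w p q); have f2 := Rabs_pos (o p a); have f3 := Rabs_pos (o q b).
have : Rabs (o p a) * Rabs (o q b) <= 1 by nra.
move=> f4; have : Rabs (w p q) * (Rabs (o p a) * Rabs (o q b)) <= Rabs (w p q) * 1.
  by apply: Rmult_le_compat_l.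
lra.
Qed.

Lemma pos_lb (I : finType) (F : I -> R) : (forall i, 0 < F i) ->
  exists g, 0 < g /\ forall i, g <= F i.
Proof.
move=> h; pose T := 1 + \big[Rplus/0]_(i : I) / F i.
have hT0 : 0 <= \big[Rplus/0]_(i : I) / F i.
  by apply: sumR_ge0 => i _; apply/Rlt_le/Rinv_0_lt_compat.
have hT : 0 < T by rewrite /T; lra.
exists (/ T); split; first by apply: Rinv_0_lt_compat.
move=> i; have := @sumR_term _ (fun i => / F i) i (fun i => Rlt_le _ _ (Rinv_0_lt_compat _ (h i))).
rewrite /= -/T => hi.
have hFi := h i.
have : / F i <= T by rewrite /T; lra.
move=> hle.
have := Rinv_le_contravar _ _ (Rinv_0_lt_compat _ hFi) hle; rewrite Rinv_inv; lra.
Qed.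

Lemma unit_nonzero n (v : vec n) : nrm2 v = 1 -> exists i, v i <> 0.
Proof.
move=> h; apply: NNPP => hn.
have : nrm2 v = 0.
  rewrite /nrm2 /dot big1 // => i _.
  have -> : v i = 0 by apply: NNPP => hi; apply: hn; exists i.
  ring.
lra.
Qed.

Lemma rk1_swap n w (o : 'I_n -> vec n) a b :
  rk1 w o b a = rk1 (fun p q => w q p) o a b.
Proof.
rewrite /rk1 exchange_big; apply: eq_bigr => p _; apply: eq_bigr => q _; ring.
Qed.

Lemma mulv_madd_rk1_dot n (L : mat n) w (o : 'I_n -> vec n) j k : orthonormal_basis o ->
  dot (o k) (mulv (madd L (rk1 w o)) (o j)) = dot (o k) (mulv L (o j)) + w k j.
Proof.
move=> ho.
have -> : mulv (madd L (rk1 w o)) (o j) = lin2 1 (mulv L (o j)) 1 (mulv (rk1 w o) (o j)).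
  by apply: functional_extensionality => a; rewrite mulv_madd /lin2; ring.
rewrite dot_lin2r dot_rk1_o //; ring.
Qed.

Lemma le_div_mul a b c : 0 < b -> a <= c / b -> a * b <= c.
Proof.
move=> hb h; have := Rmult_le_compat_r b _ _ (Rlt_le _ _ hb) h.
by have -> : c / b * b = c by field; lra.
Qed.

Lemma INR_ord_lt n (i : 'I_n) : INR i < INR n.
Proof. apply: lt_INR; apply/ltP; exact: ltn_ord. Qed.

Lemma sum2_const_bound n (F : 'I_n -> 'I_n -> R) c :
  (forall p q, Rabs (F p q) <= c) ->
  \big[Rplus/0]_(p < n) \big[Rplus/0]_(q < n) Rabs (F p q) <= INR n * (INR n * c).
Proof.
move=> h; rewrite -sumR_const; apply: sumR_le => p _; rewrite -sumR_const.
by apply: sumR_le => q _.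
Qed.

Lemma density n (hn : (2 <= n)%N) : dense_in_Sso (@graph_l n).
Proof.
move=> S L eps hS hL heps.
have [o [mu [ho he]]] := spectral hS.
pose gf := fun p : 'I_n * 'I_n => if Req_EM_T (mu p.1) (mu p.2) then 1 else Rabs (mu p.1 - mu p.2).
have hgf : forall p, 0 < gf p.
  move=> p; rewrite /gf /=; case: Req_EM_T => h /=; [lra | apply: Rabs_pos_lt => e; apply: h; lra].
have [g [hg hgle]] := pos_lb hgf.
pose nn := INR n.
have hnn : 2 <= nn by rewrite /nn; have := le_INR 2 n (leP hn); rewrite /=; lra.
pose d := Rmin (eps / (2 * (nn * nn * nn + 1))) (g / (2 * (nn + 1))).
have hnn3 : 0 < nn * nn * nn by apply: Rmult_lt_0_compat; nra.
have hd0 : 0 < d.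
  apply: Rmin_glb_lt; apply: Rdiv_lt_0_compat => //; lra.
have hd1 : d <= eps / (2 * (nn * nn * nn + 1)) by apply: Rmin_l.
have hd2 : d <= g / (2 * (nn + 1)) by apply: Rmin_r.
pose w1 (p q : 'I_n) := if p == q then d * INR p else 0.
pose S' := madd S (rk1 w1 o).
pose lam' (i : 'I_n) := mu i + d * INR i.
have hS'e : forall j a, mulv S' (o j) a = lam' j * o j a.
  move=> j a; rewrite mulv_madd he mulv_rk1_o //.
  rewrite (eq_bigr (fun p => if p == j then d * INR p * o p a else 0)).
    by rewrite sumR_delta /lam'; ring.
  by move=> p _; rewrite /w1; case: (p == j); ring.
have hinj : injective lam'.
  move=> i j e; apply: NNPP => hij.
  have hi := INR_ord_lt i; have hj := INR_ord_lt j.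
  have hi0 := pos_INR i; have hj0 := pos_INR j.
  case: (Req_EM_T (mu i) (mu j)) => hm.
    rewrite /lam' hm in e.
    have : INR i = INR j by apply: (Rmult_eq_reg_l d); lra.
    move/INR_eq => e2; apply: hij; exact: val_inj.
  move: (hgle (i, j)); rewrite /gf /=; case: Req_EM_T => [//|_] /= hgij.
  have e3 : mu i - mu j = d * (INR j - INR i) by rewrite /lam' in e; lra.
  rewrite e3 Rabs_mult Rabs_pos_eq in hgij; last lra.
  have : Rabs (INR j - INR i) < nn by apply: Rabs_def1; rewrite /nn; lra.
  move=> h4.
  have : d * Rabs (INR j - INR i) <= d * nn by apply: Rmult_le_compat_l; lra.
  have : d * nn < g.
    have : d * (2 * (nn + 1)) <= g.
      by apply: le_div_mul => //; lra.
    nra.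
  lra.
pose N p q := dot (o p) (mulv L (o q)).
have hNs : forall p q, N q p = - N p q.
  by move=> p q; rewrite /N -skew_dot // dotC.
pose eta := eps / (2 * (nn * nn + 1)).
have heta : 0 < eta by apply: Rdiv_lt_0_compat; nra.
pose w2 (p q : 'I_n) := if (p < q)%N then (if Req_EM_T (N p q) 0 then eta else 0)
  else if (q < p)%N then - (if Req_EM_T (N q p) 0 then eta else 0) else 0.
have hw2s : forall p q, w2 q p = - w2 p q.
  move=> p q; rewrite /w2; case: (ltngtP p q) => h; try ring.
have hw2b : forall p q, Rabs (w2 p q) <= eta.
  have e1 : Rabs eta <= eta by rewrite Rabs_pos_eq; lra.
  have e0 : Rabs 0 <= eta by rewrite Rabs_R0; lra.
  move=> p q; rewrite /w2; case: ltnP => _; [|case: ltnP => _];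
  repeat (case: Req_EM_T => _ /=); rewrite ?Rabs_Ropp //.
pose L' := madd L (rk1 w2 o).
exists S', L'; split; [split; [|split; [|split]] | split].
- move=> a b; rewrite /S' /madd hS rk1_swap; congr (_ + _).
  rewrite /rk1; apply: eq_bigr => p _; apply: eq_bigr => q _; rewrite /w1 eq_sym; case: eqP => [->|_] //.
- exists lam'; split => // i; exists (o i); split.
    by apply: unit_nonzero; rewrite /nrm2 ho eqxx.
  exact: hS'e.
- move=> a b; rewrite /L' /madd hL rk1_swap.
  have -> : rk1 (fun p q => w2 q p) o b a = - rk1 w2 o b a.
    rewrite /rk1 -sumR_opp; apply: eq_bigr => p _; rewrite -sumR_opp; apply: eq_bigr => q _.
    rewrite hw2s; ring.
  ring.
- exists o; split.
    split => // i; exists (lam' i); split; first by apply: unit_nonzero; rewrite /nrm2 ho eqxx.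
    exact: hS'e.
  apply: all_offdiag => // j k hjk.
  rewrite mulv_madd_rk1_dot // -/(N k j).
  rewrite /w2; case: (ltngtP k j) => h.
    by case: Req_EM_T => e /= hne; lra.
  + rewrite hNs; case: Req_EM_T => e /= hne; lra.
  + by move: hjk; rewrite (ord_inj h) eqxx.
- move=> a b; rewrite /S' /madd.
  have := rk1_bound w1 a b ho.
  have := @sum2_const_bound n w1 (d * nn) (fun p q => ltac:(
    rewrite /w1; case: eqP => _; [rewrite Rabs_mult (Rabs_pos_eq d) ?(Rabs_pos_eq (INR p)); 
      [apply: Rmult_le_compat_l; [lra| apply/Rlt_le/INR_ord_lt]| apply: pos_INR | lra] | rewrite Rabs_R0; nra])).
  rewrite -/nn => h1 h2.
  have : d * (2 * (nn * nn * nn + 1)) <= eps.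
    by apply: le_div_mul => //; lra.
  move=> h3.
  have -> : S a b - (S a b + rk1 w1 o a b) = - rk1 w1 o a b by ring.
  rewrite Rabs_Ropp; nra.
- move=> a b; rewrite /L' /madd.
  have := rk1_bound w2 a b ho.
  have := @sum2_const_bound n w2 eta hw2b.
  rewrite -/nn => h1 h2.
  have : eta * (2 * (nn * nn + 1)) = eps by rewrite /eta; field; nra.
  move=> h3.
  have -> : L a b - (L a b + rk1 w2 o a b) = - rk1 w2 o a b by ring.
  rewrite Rabs_Ropp; nra.
Qed.

Lemma dot_eig n (S : mat n) (o : 'I_n -> vec n) mu k v : symmetric S ->
  (forall a, mulv S (o k) a = mu * o k a) ->
  dot (o k) (mulv S v) = mu * dot (o k) v.
Proof.
move=> hS he; rewrite -sym_dot //.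
have -> : mulv S (o k) = (fun a => mu * o k a) by apply: functional_extensionality.
by rewrite dot_scall.
Qed.

Lemma eig_in_basis n (S : mat n) (o : 'I_n -> vec n) mu v l :
  symmetric S -> orthonormal_basis o -> (forall i a, mulv S (o i) a = mu i * o i a) ->
  (exists a, v a <> 0) -> (forall a, mulv S v a = l * v a) -> exists i, mu i = l.
Proof.
move=> hS ho he [a hva] hv.
apply: NNPP => hn.
have hc : forall i, dot (o i) v = 0.
  move=> i.
  have e1 := dot_eig v hS (he i).
  have e2 : mulv S v = (fun a => l * v a) by apply: functional_extensionality.
  rewrite e2 dot_scalr in e1.
  have : (mu i - l) * dot (o i) v = 0 by lra.
  case/Rmult_integral => // h; exfalso; apply: hn; exists i; lra.
apply: hva; rewrite (parseval_v ho v a) big1 // => i _; rewrite hc; ring.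
Qed.

Lemma mu_inj n (S : mat n) (o : 'I_n -> vec n) mu :
  symmetric S -> orthonormal_basis o -> (forall i a, mulv S (o i) a = mu i * o i a) ->
  distinct_eigs S -> injective mu.
Proof.
move=> hS ho he [lam [hlinj hlv]].
have hf : forall j, exists i, mu i = lam j.
  move=> j; have [v [hv0 hv]] := hlv j; exact: (eig_in_basis hS ho he hv0 hv).
pose f j := proj1_sig (constructive_indefinite_description _ (hf j)).
have hfe : forall j, mu (f j) = lam j.
  by move=> j; rewrite /f; case: constructive_indefinite_description.
have finj : injective f.
  by move=> j j' e; apply: hlinj; rewrite -!hfe e.
move=> i i' e.
rewrite -(f_invF finj i) -(f_invF finj i') in e *.
by rewrite !hfe in e; rewrite (hlinj _ _ e).
Qed.

Lemma eigs_fun n (S : mat n) (o : 'I_n -> vec n) :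
  (forall i, exists lam, is_eigvec S (o i) lam) ->
  exists mu, forall i a, mulv S (o i) a = mu i * o i a.
Proof.
move=> h.
exists (fun i => proj1_sig (constructive_indefinite_description _ (h i))) => i a.
by case: constructive_indefinite_description => l [_ hl] /=.
Qed.

Lemma le_mul_div a b c : 0 < b -> a * b <= c -> a <= c / b.
Proof.
move=> hb h; have := Rmult_le_compat_r (/ b) _ _ (Rlt_le _ _ (Rinv_0_lt_compat _ hb)) h.
by have -> : a * b * / b = a by field; lra.
Qed.

Lemma sumR_two (I : finType) (F : I -> R) i i' :
  (forall j, 0 <= F j) -> i != i' -> F i + F i' <= \big[Rplus/0]_(j : I) F j.
Proof.
move=> h hii; rewrite (bigD1 i) //= (bigD1 i') /=; last by rewrite eq_sym.
have := @sumR_ge0 I (fun j => (j != i) && (j != i')) F (fun j _ => h j).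
have e : \big[Rplus/0]_(i0 | (i0 != i) && (i0 != i')) F i0 =
         \big[Rplus/0]_(i0 | [&& true, i0 != i & i0 != i']) F i0 by [].
lra.
Qed.

Lemma sumR_but (I : finType) (F : I -> R) k :
  \big[Rplus/0]_(j : I) F j = F k + \big[Rplus/0]_(j | j != k) F j.
Proof. by rewrite (bigD1 k). Qed.

Lemma perturb n (S S' : mat n) (o : 'I_n -> vec n) (mu : 'I_n -> R) (gam rho : R) :
  symmetric S -> symmetric S' -> orthonormal_basis o ->
  (forall i a, mulv S (o i) a = mu i * o i a) ->
  0 < gam -> (forall p q, p != q -> gam <= (mu p - mu q)^2) ->
  0 < rho -> rho <= gam / 16 ->
  frob (fun a b => S a b - S' a b) <= rho ->
  distinct_eigs S' /\ exists o', eigenbasis S' o' /\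
     forall k, nrm2 (lin2 1 (o' k) (-1) (o k)) <= 8 * rho / gam.
Proof.
move=> hS hS' ho he hgam hgap hrho hrg hfr.
have [p [nu [hp hpe]]] := spectral hS'.
pose c i k := dot (o k) (p i).
have hpu : forall i, nrm2 (p i) = 1 by move=> i; rewrite /nrm2 hp eqxx.
have hou : forall k, nrm2 (o k) = 1 by move=> k; rewrite /nrm2 ho eqxx.
have Po : forall i, \big[Rplus/0]_(k < n) (c i k)^2 = 1.
  by move=> i; rewrite -(hpu i) (parseval_nrm ho).
have Pp : forall k, \big[Rplus/0]_(i < n) (c i k)^2 = 1.
  move=> k; rewrite -(hou k) (parseval_nrm hp); apply: eq_bigr => i _; by rewrite /c dotC.
have R1 : forall i, \big[Rplus/0]_(k < n) ((mu k - nu i)^2 * (c i k)^2) <= rho.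
  move=> i.
  pose D := fun a b => S a b - S' a b.
  have hr := frob_bound D (p i); rewrite hpu (parseval_nrm ho) in hr.
  have e : \big[Rplus/0]_(k < n) (dot (o k) (mulv D (p i)))^2 =
           \big[Rplus/0]_(k < n) ((mu k - nu i)^2 * (c i k)^2).
    apply: eq_bigr => k _.
    have -> : mulv D (p i) = lin2 1 (mulv S (p i)) (-1) (mulv S' (p i)).
      apply: functional_extensionality => a; rewrite /mulv /lin2 /D.
      rewrite -!sumR_scal -sumR_split; apply: eq_bigr => b _; ring.
    rewrite dot_lin2r (dot_eig _ hS (he k)).
    have -> : mulv S' (p i) = (fun a => nu i * p i a) by apply: functional_extensionality.
    rewrite dot_scalr /c; ring.
  rewrite e /D in hr; lra.
have ex_sig : forall i, exists k, (mu k - nu i)^2 < gam / 4.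
  move=> i; apply: NNPP => hn.
  have : gam / 4 * \big[Rplus/0]_(k < n) (c i k)^2 <= \big[Rplus/0]_(k < n) ((mu k - nu i)^2 * (c i k)^2).
    rewrite -sumR_scal; apply: sumR_le => k _.
    have : gam / 4 <= (mu k - nu i)^2 by apply: Rnot_lt_le => h; apply: hn; exists k.
    have := pow2_ge_0 (c i k); nra.
  rewrite Po; have := R1 i; lra.
pose sg i := proj1_sig (constructive_indefinite_description _ (ex_sig i)).
have hsg : forall i, (mu (sg i) - nu i)^2 < gam / 4.
  by move=> i; rewrite /sg; case: constructive_indefinite_description.
have far : forall i k, k != sg i -> gam / 4 <= (mu k - nu i)^2.
  move=> i k hk; have := hgap _ _ hk; have := hsg i.
  set x := mu k - nu i; set y := mu (sg i) - nu i.
  have -> : mu k - mu (sg i) = x - y by rewrite /x /y; ring.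
  move=> h1 h2; nra.
have others : forall i, \big[Rplus/0]_(k | k != sg i) (c i k)^2 <= 4 * rho / gam.
  move=> i.
  have h1 : gam / 4 * \big[Rplus/0]_(k | k != sg i) (c i k)^2 <=
            \big[Rplus/0]_(k | k != sg i) ((mu k - nu i)^2 * (c i k)^2).
    rewrite -sumR_scal; apply: sumR_le => k hk.
    have := far i k hk; have := pow2_ge_0 (c i k); nra.
  have h2 := R1 i; rewrite (sumR_but _ (sg i)) in h2.
  have := Rmult_le_pos _ _ (pow2_ge_0 (mu (sg i) - nu i)) (pow2_ge_0 (c i (sg i))).
  move=> h3.
  have h4 : gam / 4 * \big[Rplus/0]_(k | k != sg i) (c i k)^2 <= rho by lra.
  have -> : 4 * rho / gam = rho / (gam / 4) by field; lra.
  apply: le_mul_div; lra.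
have csg : forall i, 1 - 4 * rho / gam <= (c i (sg i))^2.
  move=> i; have := Po i; rewrite (sumR_but _ (sg i)); have := others i; lra.
have h34 : 4 * rho / gam <= 1 / 4.
  have -> : 4 * rho / gam = rho * (4 / gam) by field; lra.
  have : rho * (4 / gam) <= gam / 16 * (4 / gam).
    apply: Rmult_le_compat_r => //; apply/Rlt_le/Rdiv_lt_0_compat; lra.
  have -> : gam / 16 * (4 / gam) = 1 / 4 by field; lra.
  by [].
have sg_inj : injective sg.
  move=> i i' e; apply: NNPP => hne.
  have := @sumR_two _ (fun j => (c j (sg i))^2) i i' (fun j => pow2_ge_0 _) (introN eqP hne).
  rewrite /= Pp; have := csg i; have := csg i'; rewrite -e; lra.
have nu_inj : injective nu.
  move=> i i' e; apply: sg_inj; apply: NNPP => hne.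
  have := hgap _ _ (introN eqP hne); have := hsg i; have := hsg i'; rewrite -e.
  set x := mu (sg i) - nu i; set y := mu (sg i') - nu i.
  have -> : mu (sg i) - mu (sg i') = x - y by rewrite /x /y; ring.
  move=> h1 h2 h3; nra.
split.
  exists nu; split => // i; exists (p i); split; [exact: unit_nonzero | exact: hpe].
pose isg := invF sg_inj.
have hisg : forall k, sg (isg k) = k by move=> k; apply: f_invF.
pose s k := if Rle_dec 0 (c (isg k) k) then 1 else -1.
have hs2 : forall k, s k * s k = 1 by move=> k; rewrite /s; destruct (Rle_dec 0 (c (isg k) k)) => /=; ring.
have hsc : forall k, s k * c (isg k) k = Rabs (c (isg k) k).
  move=> k; rewrite /s; destruct (Rle_dec 0 (c (isg k) k)) as [h|h] => /=.
    by rewrite Rabs_pos_eq //; ring.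
  rewrite Rabs_left; [ring | lra].
exists (fun k a => s k * p (isg k) a); split; [split|].
- move=> k k'; rewrite dot_scall dot_scalr hp.
  case: (eqVneq k k') => [<-|hkk]; first by rewrite !eqxx; have := hs2 k; lra.
  have : isg k != isg k'.
    by apply/eqP => e; move: hkk; rewrite -(hisg k) -(hisg k') e eqxx.
  by move/negPf => -> ; ring.
- move=> k; exists (nu (isg k)); split.
    have [a ha] := unit_nonzero (hpu (isg k)).
    exists a; have := hs2 k => h; move=> e; apply: ha.
    have : s k * (s k * p (isg k) a) = 0 by rewrite e; ring.
    rewrite -Rmult_assoc h; lra.
  move=> a.
  have -> : (fun a => s k * p (isg k) a) = lin2 (s k) (p (isg k)) 0 (p (isg k)).
    by apply: functional_extensionality => b; rewrite /lin2; ring.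
  rewrite mulv_lin2 /lin2 hpe; ring.
- move=> k.
  have e1 : nrm2 (lin2 1 (fun a => s k * p (isg k) a) (-1) (o k)) =
            s k * s k * nrm2 (p (isg k)) - 2 * (s k * c (isg k) k) + nrm2 (o k).
    rewrite /nrm2 dot_lin2l !dot_lin2r !dot_scall !dot_scalr /c (dotC (o k)).
    ring.
  rewrite e1 hs2 hpu hou hsc.
  have hc1 : (c (isg k) k)^2 <= 1.
    have := CS (o k) (p (isg k)); rewrite hou hpu /c; lra.
  have hc2 : 1 - 4 * rho / gam <= (c (isg k) k)^2 by have := csg (isg k); rewrite hisg.
  have habs : (c (isg k) k)^2 <= Rabs (c (isg k) k).
    have := Rabs_pos (c (isg k) k).
    rewrite -(pow2_abs (c (isg k) k)) in hc1 *.
    move=> h; nra.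
  have -> : 8 * rho / gam = 2 * (4 * rho / gam) by field; lra.
  lra.
Qed.

Lemma est n (A B : mat n) (u u' v v' : vec n) :
  nrm2 u = 1 -> nrm2 u' = 1 -> nrm2 v' = 1 ->
  (dot u' (mulv B v') - dot u (mulv A v))^2 <=
  3 * (frob (fun a b => B a b - A a b) + nrm2 (lin2 1 u' (-1) u) * frob A
       + frob A * nrm2 (lin2 1 v' (-1) v)).
Proof.
move=> hu hu' hv'.
pose Em := fun a b => B a b - A a b.
have e1 : mulv B v' = lin2 1 (mulv Em v') 1 (mulv A v').
  apply: functional_extensionality => a; rewrite /lin2 /mulv /Em.
  rewrite -!sumR_scal -sumR_split; apply: eq_bigr => b _; ring.
have e2 : dot (lin2 1 u' (-1) u) (mulv A v') = dot u' (mulv A v') - dot u (mulv A v').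
  by rewrite dot_lin2l; ring.
have e3 : dot u (mulv A (lin2 1 v' (-1) v)) = dot u (mulv A v') - dot u (mulv A v).
  by rewrite mulv_lin2 dot_lin2r; ring.
have e : dot u' (mulv B v') - dot u (mulv A v) =
   dot u' (mulv Em v') + dot (lin2 1 u' (-1) u) (mulv A v') + dot u (mulv A (lin2 1 v' (-1) v)).
  rewrite e1 e2 e3 dot_lin2r; ring.
rewrite e.
set x := dot u' (mulv Em v'); set y := dot (lin2 1 u' (-1) u) (mulv A v');
set z := dot u (mulv A (lin2 1 v' (-1) v)).
have hx := bil_bound Em u' v'; rewrite hu' hv' -/x in hx.
have hy := bil_bound A (lin2 1 u' (-1) u) v'; rewrite hv' -/y in hy.
have hz := bil_bound A u (lin2 1 v' (-1) v); rewrite hu -/z in hz.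
have : (x + y + z)^2 <= 3 * (x^2 + y^2 + z^2).
  have := pow2_ge_0 (x - y); have := pow2_ge_0 (y - z); have := pow2_ge_0 (x - z); nra.
rewrite /Em in hx; lra.
Qed.

Lemma frob_near n eps (A B : mat n) : near eps A B ->
  frob (fun a b => A a b - B a b) <= INR n * (INR n * (eps * eps)).
Proof.
move=> h; rewrite /frob -sumR_const; apply: sumR_le => a _; rewrite -sumR_const.
apply: sumR_le => b _; have := h a b => hab.
have [h1 h2] := Rabs_def2 _ _ hab; nra.
Qed.

Lemma sq_pos x : x <> 0 -> 0 < x^2.
Proof. by move=> h; rewrite -Rsqr_pow2; apply: Rsqr_pos_lt. Qed.

Lemma openness n (hn : (2 <= n)%N) : open_in_Sso (@graph_l n).
Proof.
move=> S L [hS [hde [hL [o [[ho hoe] hno]]]]].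
split => //; split => //.
have [mu he] := eigs_fun hoe.
have muinj := mu_inj hS ho he hde.
pose gf := fun p : 'I_n * 'I_n => if p.1 == p.2 then 1 else (mu p.1 - mu p.2)^2.
have hgf : forall p, 0 < gf p.
  move=> [p q]; rewrite /gf /=; case: eqP => h; first lra.
  by apply: sq_pos => e; apply: h; apply: muinj; lra.
have [gam [hgam hgam2]] := pos_lb hgf.
have hgap : forall p q, p != q -> gam <= (mu p - mu q)^2.
  by move=> p q hpq; have := hgam2 (p, q); rewrite /gf /= (negPf hpq).
pose N (k j : 'I_n) := dot (o k) (mulv L (o j)).
pose mf := fun p : 'I_n * 'I_n => if Req_EM_T (N p.1 p.2) 0 then 1 else (N p.1 p.2)^2.
have hmf : forall p, 0 < mf p.
  move=> p; rewrite /mf; case: Req_EM_T => h /=; [lra | exact: sq_pos].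
have [m2 [hm2 hm2b]] := pos_lb hmf.
have hm2N : forall k j, N k j <> 0 -> m2 <= (N k j)^2.
  move=> k j h; have := hm2b (k, j); rewrite /mf /=; case: Req_EM_T => //= e; tauto.
pose F := frob L.
have hF : 0 <= F := frob_ge0 L.
pose K := 6 * (1 + 16 * F / gam).
have hK : 0 < K.
  have : 0 <= 16 * F / gam by apply: Rmult_le_pos; [lra | apply/Rlt_le/Rinv_0_lt_compat].
  rewrite /K; lra.
pose rho := Rmin (gam / 16) (m2 / K).
have hrho : 0 < rho by apply: Rmin_glb_lt; apply: Rdiv_lt_0_compat; lra.
have hrg : rho <= gam / 16 := Rmin_l _ _.
have hrm : rho * K <= m2 by apply: le_div_mul => //; apply: Rmin_r.
pose nn := INR n.
have hnn : 2 <= nn by rewrite /nn; have := le_INR 2 n (leP hn); rewrite /=; lra.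
pose m := Rmin 1 rho.
have hm0 : 0 < m by apply: Rmin_glb_lt; lra.
have hm1 : m <= 1 := Rmin_l _ _.
have hmr : m <= rho := Rmin_r _ _.
exists (m / (nn * nn)); split.
  apply: Rdiv_lt_0_compat => //; nra.
move=> S' L' hS' hL' hnS hnL.
have hfe : nn * (nn * (m / (nn * nn) * (m / (nn * nn)))) <= rho.
  have -> : nn * (nn * (m / (nn * nn) * (m / (nn * nn)))) = m * m / (nn * nn) by field; lra.
  apply: (proj2 (@Rle_div_l _ (nn * nn) _ ltac:(nra))).
  have : m * m <= m by nra.
  have : rho * 1 <= rho * (nn * nn) by apply: Rmult_le_compat_l; nra.
  lra.
have hfS : frob (fun a b => S a b - S' a b) <= rho.
  by apply: Rle_trans (frob_near hnS) hfe.
have hfL : frob (fun a b => L' a b - L a b) <= rho.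
  have e : (fun a b => L' a b - L a b) = (fun a b => (fun a b => L a b - L' a b) a b * -1).
    by apply: functional_extensionality => a; apply: functional_extensionality => b; ring.
  have -> : frob (fun a b => L' a b - L a b) = frob (fun a b => L a b - L' a b).
    rewrite /frob; apply: eq_bigr => a _; apply: eq_bigr => b _; ring.
  by apply: Rle_trans (frob_near hnL) hfe.
have [hdS' [o' [[ho' ho'e] hclose]]] := perturb hS hS' ho he hgam hgap hrho hrg hfS.
split; [done | split; [done | split; [done | exists o'; split; [by split | ]]]].
apply: noninv_of_witness => // J h1 h2.
have [j [k [hj [hk hne]]]] := noninv_witness ho hL hno h1 h2.
exists j, k; split => //; split => // hz.
have hou : forall k, nrm2 (o k) = 1 by move=> k'; rewrite /nrm2 ho eqxx.
have hou' : forall k, nrm2 (o' k) = 1 by move=> k'; rewrite /nrm2 ho' eqxx.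
have := @est n L L' (o k) (o' k) (o j) (o' j) (hou k) (hou' k) (hou' j).
rewrite hz.
have := hclose k; have := hclose j.
have := hm2N k j hne; rewrite -/(N k j).
set dk := nrm2 (lin2 1 (o' k) (-1) (o k)); set dj := nrm2 (lin2 1 (o' j) (-1) (o j)).
move=> h3 h4 h5 h6.
have hd : 8 * rho / gam * F = rho * (8 * F / gam) by field; lra.
have h7 : dk * F <= 8 * rho / gam * F by apply: Rmult_le_compat_r.
have h8 : F * dj <= F * (8 * rho / gam) by apply: Rmult_le_compat_l.
have h9 : 3 * (rho + 8 * rho / gam * F + F * (8 * rho / gam)) = rho * K / 2.
  rewrite /K; field; lra.
have h10 : (0 - N k j)^2 = (N k j)^2 by ring.
rewrite h10 in h6.
rewrite -/F in h6; lra.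
Qed.

Theorem lemma5p2 (n : nat) (hn : (2 <= n)%N) :
  open_in_Sso (@graph_l n) /\ dense_in_Sso (@graph_l n).
Proof. split; [exact: openness | exact: density]. Qed.
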